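(* Let refund schemes $(R_j)_{j\in P}$ satisfying Contribution Monotonicity be given. Then there exist instances of the combinatorial civic crowdfunding game $\mathcal{M}_{CC}$ using these refund schemes, satisfying Budget Surplus $\sum_{i\in N}\gamma_i \ge \sum_{j\in P} T_j$ and with refund bonuses $B_j=\vartheta_j-T_j$ for all $j\in P$, for which there is no pure strategy Nash equilibrium, i.e., the set of equilibrium contribution profiles is empty.
   Context: Combinatorial civic crowdfunding game $\mathcal{M}_{CC}=\langle P,N,\gamma,T,(\vartheta_j)_{j\in P},(R_j)_{j\in P},(B_j)_{j\in P}\rangle$: projects $P=\{1,\dots,p\}$ with target costs $T_j>0$; agents $N=\{1,\dots,n\}$ with budgets $\gamma_i\ge 0$ and private valuations $\theta_{ij}\ge 0$ for project $j$; $\vartheta_j=\sum_{i\in N}\theta_{ij}$, and it is assumed that $\vartheta_j>T_j$ for every $j$. Agent $i$ chooses contributions $x_{ij}\in\mathbb{R}_+$ with $\sum_{j\in P}x_{ij}\le\gamma_i$; $C_j=\sum_{i\in N}x_{ij}$. Project $j$ is funded iff $C_j\ge T_j$. A refund scheme for project $j$ is an anonymous function $R_j(B_j,x_{ij},C_j)\in\mathbb{R}_+$ giving agent $i$'s refund $r_{ij}$, with refund bonus $B_j>0$ and $\sum_{i\in N}r_{ij}=B_j$. Agent $i$'s utility from project $j$ is $\sigma_{ij}=\theta_{ij}-x_{ij}$ (funded utility $\sigma^F_{ij}$) if $C_j\ge T_j$, and $\sigma_{ij}=r_{ij}$ (unfunded utility $\sigma^U_{ij}$) if $C_j<T_j$;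 total utility $U_i=\sum_{j\in P}\sigma_{ij}$. A contribution profile is a pure strategy Nash equilibrium (PSNE) if no agent can increase its total utility by unilaterally changing its feasible contribution vector. Contribution Monotonicity (CM): $R_j$ is differentiable and strictly increasing in the contribution $x$, i.e., $\partial R_j/\partial x>0$. *)

(* Defs.v *)
From HB Require Import structures.
From mathcomp Require Import all_boot all_order all_algebra.
From mathcomp Require Import all_classical all_reals all_analysis.
Set Implicit Arguments. Unset Strict Implicit. Unset Printing Implicit Defensive.
Import Order.TTheory GRing.Theory Num.Theory.
Import numFieldNormedType.Exports.
Local Open Scope ring_scope.

Section CCgame.
Variable R : realType.

(* A refund scheme: an anonymous function  Rf B x C  giving the refund of an
   agent contributing x when the total contribution is C and the refund bonus
   is B. *)
Definition refund_scheme (Rf : R -> R -> R -> R) : Prop :=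
  (forall B x C : R, 0 < B -> 0 <= x -> x <= C -> 0 <= Rf B x C) /\
  (forall (B : R) (n : nat) (x : 'I_n -> R), 0 < B -> (forall i, 0 <= x i) ->
     0 < \sum_(i < n) x i ->
     \sum_(i < n) Rf B (x i) (\sum_(k < n) x k) = B) /\
  (forall B : R, Rf B 0 0 = 0).

Definition contribution_monotone (Rf : R -> R -> R -> R) : Prop :=
  forall B x C : R, 0 < B -> 0 < C -> 0 <= x -> x <= C ->
    exists df : R, is_derive x (1 : R) (fun y : R => Rf B y C) df /\ 0 < df.

Variables (n p : nat).

Definition total (x : 'I_n -> 'I_p -> R) (j : 'I_p) : R :=
  \sum_(i < n) x i j.

Definition feasible_vec (g : R) (y : 'I_p -> R) : Prop :=
  (forall j, 0 <= y j) /\ \sum_(j < p) y j <= g.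

Definition feasible (gamma : 'I_n -> R) (x : 'I_n -> 'I_p -> R) : Prop :=
  forall i, feasible_vec (gamma i) (x i).

Definition vartheta (theta : 'I_n -> 'I_p -> R) (j : 'I_p) : R :=
  \sum_(i < n) theta i j.

Definition sigma (Rf : 'I_p -> R -> R -> R -> R) (B T : 'I_p -> R)
  (theta x : 'I_n -> 'I_p -> R) (i : 'I_n) (j : 'I_p) : R :=
  if T j <= total x j then theta i j - x i j
  else Rf j (B j) (x i j) (total x j).

Definition utility (Rf : 'I_p -> R -> R -> R -> R) (B T : 'I_p -> R)
  (theta x : 'I_n -> 'I_p -> R) (i : 'I_n) : R :=
  \sum_(j < p) sigma Rf B T theta x i j.

Definition deviate (x : 'I_n -> 'I_p -> R) (i : 'I_n) (y : 'I_p -> R)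
  : 'I_n -> 'I_p -> R :=
  fun k => if k == i then y else x k.

Definition PSNE (Rf : 'I_p -> R -> R -> R -> R) (B T gamma : _)
  (theta x : 'I_n -> 'I_p -> R) : Prop :=
  feasible gamma x /\
  forall i (y : 'I_p -> R), feasible_vec (gamma i) y ->
    utility Rf B T theta (deviate x i y) i <= utility Rf B T theta x i.

Definition valid_instance (gamma : 'I_n -> R) (theta : 'I_n -> 'I_p -> R)
  (T : 'I_p -> R) : Prop :=
  (forall i, 0 <= gamma i) /\ (forall i j, 0 <= theta i j) /\
  (forall j, 0 < T j) /\ (forall j, T j < vartheta theta j).

End CCgame.

(* Main.v *)
Require Import Defs.
From HB Require Import structures.
From mathcomp Require Import all_boot all_order all_algebra.
From mathcomp Require Import all_classical all_reals all_analysis.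
From mathcomp.algebra_tactics Require Import ring lra.
Import Order.TTheory GRing.Theory Num.Theory.
Local Open Scope ring_scope.

Section Lin.
Variable R : realType.
Variable Rf : R -> R -> R -> R.
Hypothesis hR : refund_scheme Rf.
Variables (B C : R).
Hypothesis B0 : 0 < B.
Hypothesis C0 : 0 < C.

Let g a := Rf B a C.

Lemma F1 : g C = B.
Proof.
case: hR => _ [hs _].
have := hs B 1%N (fun _ => C) B0 (fun _ => ltW C0).
rewrite big_ord1 => /(_ C0); by rewrite big_ord1.
Qed.

Lemma F2 (a : R) : 0 <= a -> a <= C -> g a + g (C - a) = B.
Proof.
move=> a0 aC.
case: hR => _ [hs _].
have := hs B 2%N (fun i => nth 0 [:: a; C - a] i) B0.
rewrite !big_ord_recl !big_ord0 /=.
have -> : a + (C - a + 0) = C by ring.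
rewrite addr0 => h; apply: h => //.
move=> [[|[|k]] ?] /=; rewrite ?nth_nil; lra.
Qed.

Lemma F3 (a b : R) : 0 <= a -> 0 <= b -> a + b <= C -> g a + g b + g (C - a - b) = B.
Proof.
move=> a0 b0 abC.
case: hR => _ [hs _].
have := hs B 3%N (fun i => nth 0 [:: a; b; C - a - b] i) B0.
rewrite !big_ord_recl !big_ord0 /=.
have -> : a + (b + (C - a - b + 0)) = C by ring.
rewrite addr0 addrA => h; apply: h => //.
move=> [[|[|[|k]]] ?] /=; rewrite ?nth_nil; lra.
Qed.

Lemma gadd (a b : R) : 0 <= a -> 0 <= b -> a + b <= C -> g (a + b) = g a + g b.
Proof.
move=> a0 b0 abC.
have h2 := @F2 (a + b) (addr_ge0 a0 b0) abC.
have h3 := @F3 a b a0 b0 abC.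
have e : C - a - b = C - (a + b) by ring.
rewrite e in h3.
lra.
Qed.

Lemma gge0 (a : R) : 0 <= a -> a <= C -> 0 <= g a.
Proof. by case: hR => h _ a0 aC; apply: h. Qed.

Lemma gmono (a b : R) : 0 <= a -> a <= b -> b <= C -> g a <= g b.
Proof.
move=> a0 ab bC.
have -> : b = a + (b - a) by ring.
rewrite gadd; [|lra|lra|lra].
have := @gge0 (b - a); lra.
Qed.

Lemma gmul (k : nat) (h : R) : 0 <= h -> k%:R * h <= C -> g (k%:R * h) = k%:R * g h.
Proof.
move=> h0; elim: k => [|k IH] hk.
  rewrite !mul0r.
  have := @F2 0 (lexx 0) (ltW C0); rewrite subr0 F1; lra.
have e : k.+1%:R * h = k%:R * h + h by rewrite -addn1 natrD; ring.
have hk' : k%:R * h <= C by rewrite e in hk; lra.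
have kh0 : 0 <= k%:R * h by apply: mulr_ge0.
rewrite e gadd // ?IH //; last by rewrite -e.
rewrite -addn1 natrD; ring.
Qed.

Lemma gunit (N : nat) : (0 < N)%N -> g (C / N%:R) = B / N%:R.
Proof.
move=> N0.
have N0' : (0 : R) < N%:R by rewrite ltr0n.
have h0 : 0 <= C / N%:R by apply: divr_ge0; [exact: ltW|exact: ltW].
have e : N%:R * (C / N%:R) = C by field; lra.
have := @gmul N (C / N%:R) h0; rewrite e => /(_ (le_refl C)); rewrite F1 => hB.
rewrite hB; field; lra.
Qed.

Lemma glow (x : R) (N : nat) : (0 < N)%N -> 0 <= x -> x <= C -> B * x / C - B / N%:R <= g x.
Proof.
move=> N0 x0 xC.
have N0' : (0 : R) < N%:R by rewrite ltr0n.
have y0 : 0 <= N%:R * x / C by apply: divr_ge0; [apply: mulr_ge0; lra|lra].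
have /andP[m1 m2] := truncn_itv y0.
set m := Num.truncn _ in m1 m2.
have h0 : 0 <= C / N%:R by apply: divr_ge0; lra.
have mx : m%:R * (C / N%:R) <= x.
  rewrite mulrA ler_pdivrMr //.
  rewrite ler_pdivlMr // in m1; lra.
have mC : m%:R * (C / N%:R) <= C by lra.
have := @gmono (m%:R * (C / N%:R)) x (mulr_ge0 (ler0n _ _) h0) mx xC.
rewrite gmul // gunit // => hle.
apply: le_trans hle.
rewrite -natr1 in m2.
have : B * x / C - B / N%:R = B / N%:R * (N%:R * x / C - 1) by field; rewrite (gt_eqF C0) (gt_eqF N0').
move=> ->.
rewrite [m%:R * _]mulrC ler_pM2l; last by apply: divr_gt0.
lra.
Qed.

Lemma glin (x : R) : 0 <= x -> x <= C -> g x = B * x / C.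
Proof.
move=> x0 xC.
have gl N := @glow x N.
have gu N : (0 < N)%N -> g x <= B * x / C + B / N%:R.
  move=> N0.
  have cx0 : 0 <= C - x by lra.
  have cxC : C - x <= C by lra.
  have := @glow (C - x) N N0 cx0 cxC.
  have := @F2 x x0 xC.
  have : B * (C - x) / C = B - B * x / C by field; rewrite (gt_eqF C0).
  lra.
apply/eqP; rewrite eq_le; apply/andP; split.
  apply/ler_addgt0Pr => e e0.
  pose N := (Num.truncn (B / e)).+1.
  have N0' : (0 : R) < N%:R by rewrite ltr0n.
  have := gu N erefl.
  have : B / N%:R <= e.
    rewrite ler_pdivrMr //.
    have := truncnS_gt (B / e).
    rewrite ltr_pdivrMr // => h.
    rewrite /N; lra.
  lra.
apply/ler_addgt0Pr => e e0.
pose N := (Num.truncn (B / e)).+1.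
have N0' : (0 : R) < N%:R by rewrite ltr0n.
have := gl N erefl x0 xC.
have : B / N%:R <= e.
  rewrite ler_pdivrMr //.
  have := truncnS_gt (B / e).
  rewrite ltr_pdivrMr // => h.
  rewrite /N; lra.
lra.
Qed.
End Lin.

Lemma lin (R : realType) (Rf : R -> R -> R -> R) : refund_scheme Rf ->
  forall x C : R, 0 < C -> 0 <= x -> x <= C -> Rf 1 x C = x / C.
Proof.
move=> hR x C C0 x0 xC.
by rewrite (@glin R Rf hR 1 C ltr01 C0 x x0 xC) mul1r.
Qed.

Lemma zref (R : realType) (Rf : R -> R -> R -> R) : refund_scheme Rf ->
  forall C : R, 0 <= C -> Rf 1 0 C = 0.
Proof.
move=> hR C; rewrite le_eqVlt => /orP[/eqP <-|C0].
  by case: hR => _ [_ ->].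
by rewrite (@lin R Rf hR 0 C C0 (lexx 0) (ltW C0)) mul0r.
Qed.

Definition i0 : 'I_2 := ord0.
Definition i1 : 'I_2 := ord_max.
Definition gam (R : realType) (p : nat) : 'I_2 -> R :=
  fun i => if i == i0 then p%:R - 2^-1 else 2^-1.
Definition th (R : realType) (p : nat) : 'I_2 -> 'I_p -> R :=
  fun i j => if i == i0 then 0 else 2.
Definition TT (R : realType) (p : nat) : 'I_p -> R := fun _ => 1.

Section Game.
Variables (R : realType) (p : nat) (Rf : 'I_p -> R -> R -> R -> R).
Hypothesis hR : forall j, refund_scheme (Rf j).
Hypothesis hp : (0 < p)%N.

Lemma sum2 (F : 'I_2 -> R) : \sum_(i < 2) F i = F i0 + F i1.
Proof. by rewrite big_ord_recl big_ord1; congr (_ + F _); apply: val_inj. Qed.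

Lemma two (i : 'I_2) : i = i0 \/ i = i1.
Proof. case: i => [[|[|k]] h]; [left|right|by []]; exact: val_inj. Qed.

Lemma Bf1 j : vartheta (th R p) j - TT R p j = 1.
Proof. rewrite /vartheta sum2 /th /TT eqxx. have -> : (i1 == i0) = false by []. lra. Qed.

Definition dv (x : 'I_2 -> 'I_p -> R) (i : 'I_2) (j : 'I_p) (v : R) : 'I_p -> R :=
  fun j' => if j' == j then v else x i j'.

Lemma tot_dev x i j v j' :
  Defs.total (deviate x i (dv x i j v)) j' = Defs.total x j' - x i j' + dv x i j v j'.
Proof.
rewrite /Defs.total (bigD1 i) //= [in RHS](bigD1 i) //= /deviate eqxx.
rewrite (eq_bigr (fun k => x k j')); last by move=> k /negbTE ->.
lra.
Qed.

Lemma sum_dv x i j v : \sum_(j' < p) dv x i j v j' = \sum_(j' < p) x i j' - x i j + v.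
Proof.
rewrite (bigD1 j) //= [in RHS](bigD1 j) //= /dv eqxx.
rewrite (eq_bigr (fun k => x i k)); last by move=> k /negbTE ->.
lra.
Qed.

Let Bf := fun j => vartheta (th R p) j - TT R p j.
Let sg := sigma Rf Bf (TT R p) (th R p).
Let U := utility Rf Bf (TT R p) (th R p).

Lemma sgE x i j : sg x i j =
  if 1 <= Defs.total x j then th R p i j - x i j else Rf j 1 (x i j) (Defs.total x j).
Proof. by rewrite /sg /sigma /Bf Bf1. Qed.

Lemma U_dev x i j v :
  U (deviate x i (dv x i j v)) i = U x i - sg x i j + sg (deviate x i (dv x i j v)) i j.
Proof.
rewrite /U /utility (bigD1 j) //= [in RHS](bigD1 j) //=.
rewrite -/sg.
rewrite (eq_bigr (fun k => sg x i k)); first by lra.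
move=> k kj.
rewrite !sgE tot_dev /deviate eqxx /dv (negbTE kj).
by rewrite subrK.
Qed.

Lemma dev_contra x i j v :
  PSNE Rf Bf (TT R p) (gam R p) (th R p) x -> 0 <= v ->
  \sum_(j' < p) x i j' - x i j + v <= gam R p i ->
  sg x i j < sg (deviate x i (dv x i j v)) i j -> False.
Proof.
move=> [hf hN] v0 hs hlt.
have fy : feasible_vec (gam R p i) (dv x i j v).
  split; last by rewrite sum_dv.
  move=> j'; rewrite /dv; case: (j' == j) => //; by case: (hf i).
have := hN i _ fy.
rewrite -/U U_dev.
lra.
Qed.

Lemma noPSNE x : PSNE Rf Bf (TT R p) (gam R p) (th R p) x -> False.
Proof.
move=> hP; have [hf _] := hP.
have nn i j : 0 <= x i j by case: (hf i) => h _; exact: h j.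
have sb i : \sum_(j < p) x i j <= gam R p i by case: (hf i).
have le_sum i j : x i j <= \sum_(j' < p) x i j'.
  rewrite (bigD1 j) //=; rewrite lerDl; apply: sumr_ge0 => k _; exact: nn.
have tot2 j : Defs.total x j = x i0 j + x i1 j by rewrite /Defs.total sum2.
have gi0 : gam R p i0 = p%:R - 2^-1 by rewrite /gam eqxx.
have gi1 : gam R p i1 = 2^-1 by rewrite /gam; have -> : (i1 == i0) = false by [].
have p1 : (1 : R) <= p%:R by rewrite ler1n.
have h2a : (0 : R) < 2^-1 by rewrite invr_gt0.
have h2b : (2 : R)^-1 < 1 by rewrite invf_lt1 // ltr1n.
have unf j : Defs.total x j < 1.
  rewrite ltNge; apply/negP => hF.
  case: (ltrP 0 (x i0 j)) => h.
    apply: (@dev_contra x i0 j 0 hP (lexx 0)).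
      have := sb i0; lra.
    rewrite !sgE hF tot_dev /deviate eqxx /dv eqxx /th eqxx.
    case: ifP => _; first lra.
    rewrite zref //; first lra.
    rewrite tot2; have := nn i1 j; lra.
  have := nn i0 j; have := le_sum i1 j; have := sb i1; rewrite tot2 in hF; lra.
have D i j : \sum_(j' < p) x i j' < gam R p i ->
    (x i j < Defs.total x j \/ Defs.total x j = 0) -> False.
  move=> hs hc.
  have T0 : 0 <= Defs.total x j by rewrite tot2; have := nn i0 j; have := nn i1 j; lra.
  have xT : x i j <= Defs.total x j.
    rewrite tot2; have := nn i0 j; have := nn i1 j.
    have [ei|ei] := two i; rewrite ei; lra.
  have [e [e0 [ea eb]]] : exists e, 0 < e /\ e <= gam R p i - \sum_(j' < p) x i j' /\
      e < 1 - Defs.total x j.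
    have := unf j => u.
    case: (lerP (gam R p i - \sum_(j' < p) x i j') (1 - Defs.total x j)) => h;
      [exists ((gam R p i - \sum_(j' < p) x i j') / 2) | exists ((1 - Defs.total x j) / 2)]; lra.
  apply: (@dev_contra x i j (x i j + e) hP).
      have := nn i j; lra.
    lra.
  rewrite !sgE tot_dev /deviate eqxx /dv eqxx.
  have et : Defs.total x j - x i j + (x i j + e) = Defs.total x j + e by ring.
  rewrite et.
  have -> : (1 <= Defs.total x j) = false by apply/negbTE; rewrite -ltNge; exact: unf.
  have -> : (1 <= Defs.total x j + e) = false by apply/negbTE; rewrite -ltNge; lra.
  have Te : 0 < Defs.total x j + e by lra.
  have xe0 : 0 <= x i j + e by have := nn i j; lra.
  have xeT : x i j + e <= Defs.total x j + e by lra.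
  rewrite (@lin R (Rf j) (hR j) _ _ Te xe0 xeT).
  case: hc => hc.
    have T0' : 0 < Defs.total x j by have := nn i j; lra.
    rewrite (@lin R (Rf j) (hR j) _ _ T0' (nn i j) xT).
    rewrite -subr_gt0.
    have -> : (x i j + e) / (Defs.total x j + e) - x i j / Defs.total x j =
       e * (Defs.total x j - x i j) / (Defs.total x j * (Defs.total x j + e)).
      by field; rewrite (gt_eqF T0') (gt_eqF Te).
    apply: divr_gt0; apply: mulr_gt0 => //; lra.
  have x0 : x i j = 0 by have := nn i j; lra.
  rewrite hc x0 zref //; apply: divr_gt0; lra.
pose j0 := Ordinal hp.
case: (ltrP (\sum_(j < p) x i0 j) (gam R p i0)) => h0.
  case: (pselect (exists j, 0 < x i1 j)) => [[j hj]|hno].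
    apply: (D i0 j h0); left; rewrite tot2; lra.
  have z j : x i1 j = 0.
    apply/eqP; rewrite eq_le nn andbT leNgt; apply/negP => hj; apply: hno; by exists j.
  have s10 : \sum_(j < p) x i1 j = 0 by rewrite big1.
  apply: (D i1 j0); first lra.
  rewrite tot2 z addr0.
  case: (ltrP 0 (x i0 j0)) => hx; [left; lra | right; have := nn i0 j0; lra].
case: (ltrP (\sum_(j < p) x i1 j) (gam R p i1)) => h1.
  have [j hj] : exists j, 0 < x i0 j.
    case: (pselect (exists j, 0 < x i0 j)) => // hno; exfalso.
    have : \sum_(j < p) x i0 j <= \sum_(j < p) (0 : R).
      apply: ler_sum => j _; rewrite leNgt; apply/negP => hj; apply: hno; by exists j.
    rewrite big1_eq; lra.
  apply: (D i1 j h1); left; rewrite tot2; lra.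
have : \sum_(j < p) Defs.total x j < \sum_(j < p) (1 : R).
  rewrite [X in X < _](bigD1 j0) // [X in _ < X](bigD1 j0) //.
  apply: ltr_leD; first exact: unf.
  apply: ler_sum => j _; exact: ltW (unf j).
rewrite /Defs.total exchange_big sum2 sumr_const card_ord.
lra.
Qed.
End Game.

Theorem theorem2 (R : realType) (p : nat) (Rf : 'I_p -> R -> R -> R -> R) :
  (0 < p)%N ->
  (forall j, refund_scheme (Rf j)) ->
  (forall j, contribution_monotone (Rf j)) ->
  exists (n : nat) (gamma : 'I_n -> R) (theta : 'I_n -> 'I_p -> R)
         (T : 'I_p -> R),
    valid_instance gamma theta T /\
    \sum_(j < p) T j <= \sum_(i < n) gamma i /\
    forall x : 'I_n -> 'I_p -> R,
      ~ PSNE Rf (fun j => vartheta theta j - T j) T gamma theta x.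
Proof.
move=> hp hR _.
exists 2%N, (gam R p), (th R p), (TT R p).
have h2a : (0 : R) < 2^-1 by rewrite invr_gt0.
have p1 : (1 : R) <= p%:R by rewrite ler1n.
split; [|split].
- split; [|split; [|split]].
  + move=> i; rewrite /gam; case: ifP => _; lra.
  + move=> i j; rewrite /th; case: ifP => _; lra.
  + by move=> j; rewrite /TT ltr01.
  + move=> j; have := @Bf1 R p j; lra.
- rewrite sum2 /gam eqxx; have -> : (i1 == i0) = false by [].
  rewrite /TT sumr_const card_ord; lra.
- move=> x hx; exact: (@noPSNE R p Rf hR hp x hx).
Qed.
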